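(* The following conjecture of Lovett, Meka, Mertz, Pitassi and Zhang is false when $m\leq \log_2 (N/\Delta)-\omega(1)$: ''There exists $c$ such that for all large enough $m$ the following holds: Let $\mathcal{X},\mathcal{Y}$ be distributions on $[m]^N$ and $(\{0,1\}^m)^N$, respectively, each with entropy deficiency at most $\Delta$. Then there exist $I\subseteq [N]$ with $|I|\leq c\Delta$ and $\gamma\in\{0,1\}^I$ such that for all $z\in\{0,1\}^N$ with $z_I=\gamma$ we have $\Pr_{x\sim\mathcal{X},\,y\sim\mathcal{Y}}[\mathrm{IND}_m^N(x,y)=z]>0$.'' Moreover, for all $\Delta$, when $m\le (1-\alpha)\log_2 N$, there exist such distributions $\mathcal{X}$ (uniform on $[m]^N$) and $\mathcal{Y}$ of entropy deficiency at most $\Delta$ such that for any set $I\subseteq[N]$ and $\gamma\in\{0,1\}^I$ for which the property ''for all $z\in\{0,1\}^N$ with $z_I=\gamma$, $\Pr_{x\sim\mathcal{X},\,y\sim\mathcal{Y}}[\mathrm{IND}_m^N(x,y)=z]>0$'' holds, $|I|$ must be $\Omega(N^\alpha)$.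
   Context: $\mathrm{IND}_m:[m]\times\{0,1\}^m\to\{0,1\}$ is the Index function $\mathrm{IND}_m(x,y)=y_x$, and $\mathrm{IND}_m^N$ applies it coordinatewise to $x\in[m]^N$, $y\in(\{0,1\}^m)^N$. The entropy deficiency of a distribution on a universe $U$ is $\log_2|U|$ minus its entropy; for a set it is that of the uniform distribution on the set. The min-entropy rate of a distribution on $U^N$ is the largest $\tau$ such that for every $J\subseteq[N]$ and $\alpha_J\in U^J$, $\Pr[x_J=\alpha_J]\le |U|^{-\tau|J|}$. *)

(* Defs.v *)
From HB Require Import structures.
From mathcomp Require Import all_boot all_order all_algebra.
From mathcomp Require Import reals exp.
Set Implicit Arguments. Unset Strict Implicit. Unset Printing Implicit Defensive.
Import Order.TTheory GRing.Theory Num.Theory.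
Local Open Scope ring_scope.

Section Defs.
Variable R : realType.

Definition log2 (x : R) : R := ln x / ln 2.

Definition is_dist (U : finType) (p : U -> R) : Prop :=
  (forall u, 0 <= p u) /\ \sum_(u : U) p u = 1.

Definition entropy (U : finType) (p : U -> R) : R :=
  - \sum_(u : U) (if p u == 0 then 0 else p u * log2 (p u)).

Definition deficiency (U : finType) (p : U -> R) : R :=
  log2 (#|U|%:R) - entropy p.

Definition unif (U : finType) : U -> R := fun _ => (#|U|%:R)^-1.

Definition Xspace (N m : nat) := {ffun 'I_N -> 'I_m}.
Definition Yspace (N m : nat) := {ffun 'I_N -> {ffun 'I_m -> bool}}.

Definition IND (m : nat) (x : 'I_m) (y : {ffun 'I_m -> bool}) : bool := y x.
Definition INDN (N m : nat) (x : Xspace N m) (y : Yspace N m)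
  : {ffun 'I_N -> bool} := [ffun i => IND (x i) (y i)].

Definition prIND (N m : nat) (X : Xspace N m -> R) (Y : Yspace N m -> R)
  (z : {ffun 'I_N -> bool}) : R :=
  \sum_(x : Xspace N m) \sum_(y : Yspace N m)
     (if INDN x y == z then X x * Y y else 0).

(* the property of (I, gamma): every z with z_I = gamma has positive
   probability.  gamma in {0,1}^I is encoded as a function on [N] of which
   only the values on I matter. *)
Definition good_fix (N m : nat) (X : Xspace N m -> R) (Y : Yspace N m -> R)
  (I : {set 'I_N}) (gamma : {ffun 'I_N -> bool}) : Prop :=
  forall z : {ffun 'I_N -> bool},
    (forall i, i \in I -> z i = gamma i) -> 0 < prIND X Y z.

End Defs.

(* Main.v *)
Require Import Defs.
From HB Require Import structures.
From mathcomp Require Import all_boot all_order all_algebra.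
From mathcomp Require Import reals exp ring lra.
Import Order.TTheory GRing.Theory Num.Theory.
Local Open Scope ring_scope.

Section Ent.
Variable R : realType.

Lemma sum_ind_set (U : finType) (A : {set U}) :
  \sum_(u : U) ((u \in A)%:R : R) = #|A|%:R.
Proof.
rewrite (eq_bigr (fun u => if u \in A then 1 else 0)); last by move=> u _; case: (u \in A).
by rewrite -big_mkcond /= sumr_const; congr (_ *+ _); apply: eq_card.
Qed.

Lemma unif_set (U : finType) (S : {set U}) (p : U -> R) :
  (0 < #|S|)%N -> (forall u, p u = if u \in S then (#|S|%:R)^-1 else 0) ->
  is_dist p /\ entropy p = log2 (#|S|%:R).
Proof.
move=> S0 hp.
have Sp : (0 : R) < #|S|%:R by rewrite ltr0n.
have Si : (#|S|%:R : R)^-1 != 0 by rewrite invr_eq0 gt_eqF.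
split.
  split; first by move=> u; rewrite hp; case: ifP => _ //; rewrite invr_ge0 ler0n.
  rewrite (eq_bigr (fun u => (u \in S)%:R * (#|S|%:R)^-1)); last first.
    by move=> u _; rewrite hp; case: (u \in S); rewrite ?mul1r ?mul0r.
  by rewrite -mulr_suml sum_ind_set divff // gt_eqF.
rewrite /entropy (eq_bigr (fun u => (u \in S)%:R * ((#|S|%:R)^-1 * log2 (#|S|%:R)^-1))); last first.
  move=> u _; rewrite hp; case: (u \in S); rewrite ?mul1r ?mul0r ?eqxx //.
  by rewrite (negbTE Si).
rewrite -mulr_suml sum_ind_set mulrA divff ?gt_eqF // mul1r /log2 lnV ?posrE //.
by rewrite mulNr opprK.
Qed.
End Ent.

Section Core.
Variable R : realType.
Variables N m : nat.

Definition bz : {ffun 'I_m -> bool} := [ffun=> false].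

Lemma card_fix (A : {set 'I_N}) :
  #|[set y : Yspace N m | [forall i in A, y i == bz]]| = ((2 ^ m) ^ (N - #|A|))%N.
Proof.
have -> : (N - #|A|)%N = #|~: A|.
  have h := cardsC A; rewrite card_ord in h.
  have hA : (#|A| <= N)%N by rewrite -[X in (_ <= X)%N](card_ord N) max_card.
  by apply/eqP; rewrite -(eqn_add2l #|A|) subnKC // h.
have -> : (2 ^ m)%N = #|{: {ffun 'I_m -> bool}}| by rewrite card_ffun card_bool card_ord.
rewrite -(card_pffun_on bz (~: A) predT); apply: eq_card => y.
rewrite inE; apply/forall_inP/pffun_onP => [H | [H1 H2] i iA].
  split; last by move=> b.
  apply/subsetP => i; rewrite !inE; apply: contraR => /negbNE iA.
  by apply: H.
apply/eqP; apply: contraTeq iA => yi.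
have : i \in bz.-support y by rewrite inE.
by move/(subsetP H1); rewrite inE.
Qed.

Lemma cardY : #|Yspace N m| = ((2 ^ m) ^ N)%N.
Proof. by rewrite card_ffun card_ffun card_bool !card_ord. Qed.

Lemma sum_ind (U : finType) (P : pred U) :
  \sum_(u : U) ((P u)%:R : R) = #|P|%:R.
Proof.
rewrite (eq_bigr (fun u => if P u then 1 else 0)); last by move=> u _; case: (P u).
by rewrite -big_mkcond /= sumr_const.
Qed.

Lemma sum_ind_set0 (U : finType) (A : {set U}) :
  \sum_(u : U) ((u \in A)%:R : R) = #|A|%:R.
Proof. by rewrite (@sum_ind _ (fun u => u \in A)); congr (_%:R); apply: eq_card. Qed.

Definition Zc (y : Yspace N m) : R := \sum_(i < N) ((y i == bz)%:R : R).

Lemma card_fix_real (A : {set 'I_N}) :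
  (#|[set y : Yspace N m | [forall i in A, y i == bz]]|%:R : R)
  = ((2 ^ m)%:R ^+ N) / ((2 ^ m)%:R ^+ #|A|).
Proof.
rewrite card_fix natrX.
have hA : (#|A| <= N)%N by rewrite -[X in (_ <= X)%N](card_ord N) max_card.
have M0 : ((2 ^ m)%:R : R) != 0 by rewrite pnatr_eq0 expn_eq0.
move: hA; move: (#|A|) => k hk.
by rewrite -{2}(subnK hk) exprD mulfK // expf_neq0.
Qed.

Lemma sumZ : \sum_(y : Yspace N m) Zc y
   = N%:R * (((2 ^ m)%:R ^+ N) / (2 ^ m)%:R).
Proof.
rewrite /Zc exchange_big /= mulr_natl.
have -> : forall x : R, x *+ N = \sum_(i < N) x by move=> x; rewrite sumr_const card_ord.
apply: eq_bigr => i _; rewrite sum_ind.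
transitivity (#|[set y : Yspace N m | [forall j in [set i], y j == bz]]|%:R : R); last first.
  by rewrite card_fix_real cards1 expr1.
congr (_%:R); apply: eq_card => y; rewrite !inE; apply/idP/forall_inP.
  by move=> /eqP h j; rewrite inE => /eqP ->; rewrite h.
by move=> h; apply: h; rewrite inE.
Qed.
Lemma sumZ2 : \sum_(y : Yspace N m) Zc y ^+ 2
   = N%:R * (((2 ^ m)%:R ^+ N) / (2 ^ m)%:R)
     + N%:R * (N%:R - 1) * (((2 ^ m)%:R ^+ N) / (2 ^ m)%:R ^+ 2).
Proof.
set T := (2 ^ m)%:R ^+ N; set M : R := (2 ^ m)%:R.
have e1 : forall y : Yspace N m, Zc y ^+ 2 =
   \sum_(i < N) \sum_(j < N) ((y i == bz) && (y j == bz))%:R.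
  move=> y; rewrite expr2 /Zc mulr_suml; apply: eq_bigr => i _.
  rewrite mulr_sumr; apply: eq_bigr => j _; by rewrite -natrM mulnb.
rewrite (eq_bigr _ (fun y _ => e1 y)) exchange_big /=.
have e2 : forall i : 'I_N, \sum_(y : Yspace N m) \sum_(j < N)
     ((y i == bz) && (y j == bz))%:R = T / M + (N%:R - 1) * (T / M ^+ 2).
  move=> i; rewrite exchange_big /=.
  have e3 : forall j : 'I_N, \sum_(y : Yspace N m) ((y i == bz) && (y j == bz))%:R
     = T / M ^+ (i != j).+1.
    move=> j; rewrite sum_ind -(cards2 i j) -card_fix_real; congr (_%:R).
    apply: eq_card => y; rewrite !inE; apply/andP/forall_inP.
      by move=> [/eqP h1 /eqP h2] k; rewrite !inE => /orP[] /eqP ->; rewrite ?h1 ?h2.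
    by move=> h; split; apply: h; rewrite !inE eqxx ?orbT.
  rewrite (eq_bigr _ (fun j _ => e3 j)) (bigD1 i) //= eqxx expr1; congr (_ + _).
  rewrite (eq_bigr (fun _ => T / M ^+ 2)); last first.
    by move=> j ji; rewrite eq_sym ji.
  rewrite sumr_const -[X in X = _]mulr_natl; congr (_ * _).
  have -> : #|(fun j : 'I_N => j != i)| = N.-1.
    by have := cardC1 i; rewrite card_ord => <-; apply: eq_card.
  have N0 : (0 < N)%N by apply: leq_ltn_trans (ltn_ord i).
  by rewrite -subn1 natrB.
rewrite (eq_bigr _ (fun i _ => e2 i)) sumr_const card_ord -mulr_natl.
ring.
Qed.
Lemma Zc_ge0 y : 0 <= Zc y.
Proof. by apply: sumr_ge0 => i _; apply: ler0n. Qed.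

Lemma var_le : \sum_(y : Yspace N m) (Zc y - N%:R / (2 ^ m)%:R) ^+ 2
   <= ((2 ^ m)%:R ^+ N) * (N%:R / (2 ^ m)%:R).
Proof.
set mu := N%:R / (2 ^ m)%:R.
have e : forall y : Yspace N m, (Zc y - mu) ^+ 2 = Zc y ^+ 2 - (2 * mu) * Zc y + mu ^+ 2.
  by move=> y; ring.
rewrite (eq_bigr _ (fun y _ => e y)) big_split /= sumrB -mulr_sumr sumZ2 sumZ.
rewrite sumr_const cardY.
set M : R := (2 ^ m)%:R; set T := M ^+ N.
have M0 : M != 0 by rewrite pnatr_eq0 expn_eq0.
rewrite -[mu ^+ 2 *+ _]mulr_natr natrX -/M -/T.
have -> : N%:R * (T / M) + N%:R * (N%:R - 1) * (T / M ^+ 2) - 2 * mu * (N%:R * (T / M)) +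
    mu ^+ 2 * T = T * mu - N%:R * T / M ^+ 2.
  rewrite /mu. field. done.
rewrite lerBlDr lerDl; apply: divr_ge0; last by apply: exprn_ge0; apply: ler0n.
by apply: mulr_ge0; [apply: ler0n | apply: exprn_ge0; apply: ler0n].
Qed.

Definition Sg : {set Yspace N m} := [set y | N%:R / (2 ^ m)%:R / 2 <= Zc y].

Lemma cheb : (#|~: Sg|%:R : R) * (N%:R / (2 ^ m)%:R / 2) ^+ 2
   <= ((2 ^ m)%:R ^+ N) * (N%:R / (2 ^ m)%:R).
Proof.
set mu := N%:R / (2 ^ m)%:R.
have mu0 : 0 <= mu by apply: divr_ge0; apply: ler0n.
apply: le_trans (var_le); rewrite -sum_ind_set mulr_suml; apply: ler_sum => y _.
rewrite !inE; case: (lerP (mu / 2) (Zc y)) => h /=; first by rewrite mul0r; apply: sqr_ge0.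
have z0 := Zc_ge0 y.
rewrite mul1r; rewrite /mu in mu0 h *; nra.
Qed.
Lemma Zc_le_I (y : Yspace N m) (I : {set 'I_N}) :
  (forall i, y i == bz -> i \in I) -> Zc y <= #|I|%:R.
Proof.
move=> h; rewrite /Zc -sum_ind_set; apply: ler_sum => i _.
by case E: (y i == bz) => //=; rewrite (h i E).
Qed.

Lemma no_good (X : Xspace N m -> R) (Y : Yspace N m -> R) (I : {set 'I_N})
  (gamma : {ffun 'I_N -> bool}) :
  (forall y, y \notin Sg -> Y y = 0) ->
  good_fix X Y I gamma -> (N%:R / (2 ^ m)%:R / 2 : R) <= #|I|%:R.
Proof.
move=> Y0 G; rewrite leNgt; apply/negP => lt.
pose z : {ffun 'I_N -> bool} := [ffun i => if i \in I then gamma i else true].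
have zI : forall i, i \in I -> z i = gamma i by move=> i iI; rewrite ffunE iI.
have := G z zI; rewrite /prIND big1 ?ltxx // => x _; apply: big1 => y _.
case yS: (y \in Sg); last by rewrite Y0 ?yS // mulr0; case: ifP.
case E: [exists i, (i \notin I) && (y i == bz)]; last first.
  move/negbT/existsPn: E => E.
  have : Zc y <= #|I|%:R.
    apply: Zc_le_I => i yi; have := E i; rewrite yi andbT; exact: negbNE.
  move: yS; rewrite inE => yS le2.
  by have := lt_le_trans (le_lt_trans yS (le_lt_trans le2 lt)) (lexx _); rewrite ltxx.
move/existsP: E => [i /andP [iI /eqP yi]].
case: eqP => // E; have := congr1 (fun f : {ffun 'I_N -> bool} => f i) E.
by rewrite /INDN /z !ffunE (negbTE iI) /IND yi ffunE.
Qed.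
Lemma core : (8 : R) <= N%:R / (2 ^ m)%:R ->
  exists Y : Yspace N m -> R,
   [/\ is_dist Y, deficiency Y * ln 2 <= 8 / (N%:R / (2 ^ m)%:R) &
     forall X I gamma, good_fix X Y I gamma -> (N%:R / (2 ^ m)%:R / 2 : R) <= #|I|%:R].
Proof.
set mu : R := N%:R / (2 ^ m)%:R => mu8.
have mu0 : 0 < mu by apply: lt_le_trans mu8; rewrite ltr0n.
have ch := cheb; rewrite -/mu in ch.
set b : R := #|~: Sg|%:R in ch.
have hT : (#|Yspace N m|%:R : R) = #|Sg|%:R + b by rewrite -natrD cardsC.
set T : R := #|Yspace N m|%:R in hT.
have eT : ((2 ^ m)%:R ^+ N : R) = T.
  by rewrite /T cardY -natrX.
rewrite eT in ch.
set a : R := #|Sg|%:R in hT.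
have b0 : 0 <= b by apply: ler0n.
have bmu : b * mu <= 4 * T.
  have : b * mu * mu <= 4 * T * mu by nra.
  by rewrite ler_pM2r.
have b8 : b * 8 <= b * mu by rewrite ler_wpM2l.
have T0 : 0 < T by rewrite -eT exprn_gt0 // ltr0n expn_gt0.
have a0 : 0 < a by nra.
have S0 : (0 < #|Sg|)%N by rewrite -(ltr0n R).
pose Y := fun y : Yspace N m => if y \in Sg then (#|Sg|%:R : R)^-1 else 0.
have [dY eY] := @unif_set R _ Sg Y S0 (fun u => erefl).
exists Y; split => //; last first.
  move=> X I g; apply: no_good => y yS; rewrite /Y (negbTE yS) //.
rewrite /deficiency eY /log2 -/T -/a -mulrBl.
rewrite divfK; last by rewrite gt_eqF // ln_gt0 // ltr1n.
rewrite -ln_div ?posrE; [|nra|done].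
have -> : T / a = 1 + b / a by rewrite hT mulrDl divff ?gt_eqF.
apply: le_trans (le_ln1Dx _) _.
  by apply: lt_le_trans (divr_ge0 b0 (ltW a0)); rewrite ltrN10.
rewrite ler_pdivrMr // mulrAC ler_pdivlMr //.
nra.
Qed.
End Core.

Section Main.
Variable R : realType.

Lemma ln2_ge : (1 / 2 : R) <= ln 2.
Proof.
have h : ln (1 + (- 2^-1) : R) <= - 2^-1 by apply: le_ln1Dx; lra.
have e : (1 + - 2^-1 : R) = 2^-1 by field.
rewrite e lnV ?posrE // in h; lra.
Qed.

Lemma ln2_gt0 : (0 : R) < ln 2.
Proof. by rewrite ln_gt0 // ltr1n. Qed.

Lemma log2_bound (N m k : nat) (D : R) : 0 < D -> (0 < m)%N ->
  m%:R + k%:R <= log2 (N%:R / D) -> ((2 ^ (m + k))%:R : R) <= N%:R / D.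
Proof.
move=> D0 m0 h.
have l2 := @ln2_gt0.
case: (posnP N) => [N0 | Np].
  move: h; rewrite N0 mul0r /log2 ln0 // mul0r => h.
  have : (1 : R) <= m%:R by rewrite ler1n.
  have : (0 : R) <= k%:R by apply: ler0n.
  lra.
have ND : 0 < N%:R / D by apply: divr_gt0; rewrite ?ltr0n.
have e : ((2 ^ (m + k))%:R : R) = 2 ^+ (m + k) by rewrite natrX.
rewrite e -ler_ln ?posrE ?exprn_gt0 //.
rewrite lnXn // -[ln _ *+ _]mulr_natr mulrC.
by move: h; rewrite /log2 ler_pdivlMr // -natrD.
Qed.

Lemma unif_ok (U : finType) : (0 < #|U|)%N ->
  is_dist (@unif R U) /\ deficiency (@unif R U) = 0.
Proof.
move=> U0.
have S0 : (0 < #|[set: U]|)%N by rewrite cardsT.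
have [d e] := @unif_set R U setT (@unif R U) S0 (fun u => ltac:(by rewrite in_setT cardsT)).
by split => //; rewrite /deficiency e cardsT subrr.
Qed.

Lemma part1 : (forall c : R, exists K : R,
     forall (N m : nat) (Delta : R),
       1 <= Delta -> (0 < m)%N ->
       m%:R + K <= log2 (N%:R / Delta) ->
       exists (X : Xspace N m -> R) (Y : Yspace N m -> R),
         [/\ is_dist X, is_dist Y, deficiency X <= Delta, deficiency Y <= Delta &
           forall (I : {set 'I_N}) (gamma : {ffun 'I_N -> bool}),
             #|I|%:R <= c * Delta -> ~ good_fix X Y I gamma]).
Proof.
move=> c; pose t := Num.truncn `|c|; exists ((t + 5))%:R => N m D D1 m0 hlog.
have D0 : 0 < D by lra.
have h2 := @log2_bound N m (t + 5) D D0 m0 hlog.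
have M0 : (0 : R) < (2 ^ m)%:R by rewrite ltr0n expn_gt0.
set mu : R := N%:R / (2 ^ m)%:R.
have hmu : (2 ^ (t + 5))%:R * D <= mu.
  rewrite /mu ler_pdivlMr // mulrAC -ler_pdivlMr // -natrM -expnD addnC.
  exact: h2.
have p32 : (32 : R) <= (2 ^ (t + 5))%:R.
  by rewrite (_ : 32 = (2 ^ 5)%N%:R) // ler_nat leq_exp2l // leq_addl.
have mu32 : 32 <= mu by nra.
have mu8 : 8 <= mu by lra.
have [Y [dY defY gY]] := @core R N m mu8.
have U0 : (0 < #|Xspace N m|)%N by rewrite card_ffun !card_ord expn_gt0 m0.
have [dX defX] := @unif_ok (Xspace N m) U0.
exists (@unif R _), Y; split => //.
- by rewrite defX; lra.
- have l2 := ln2_ge.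
  have : 8 / mu <= 1 / 4.
    by rewrite ler_pdivrMr ?(lt_le_trans _ mu8) // ?ltr0n //; lra.
  move=> h; have h' := le_trans defY h; nra.
- move=> I g hI G; have := gY _ I g G.
  have ct : `|c| < t.+1%:R by apply: truncnS_gt.
  have tt : (t.+1%:R : R) <= (2 ^ (t + 4))%:R.
    rewrite ler_nat; apply: leq_trans (ltnW (ltn_expl _ (isT : (1 < 2)%N))).
    by rewrite -addn1 leq_add2l.
  have e : (2 ^ (t + 5))%:R = 2 * (2 ^ (t + 4))%:R :> R by rewrite (_ : (t + 5 = (t + 4).+1)%N) ?expnS ?natrM // addnS.
  have cc : c <= `|c| by apply: ler_norm.
  rewrite e in hmu.
  move=> h; have : `|c| * D < (2 ^ (t + 4))%:R * D by rewrite ltr_pM2r //; lra.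
  have cD : c * D <= `|c| * D by rewrite ler_pM2r.
  rewrite -/mu in h; lra.
Qed.

Lemma part2 : (forall Delta alpha : R, 0 < Delta -> 0 < alpha < 1 ->
     exists (c : R) (N0 : nat), 0 < c /\
       forall N m : nat, (N0 <= N)%N -> (0 < m)%N ->
         m%:R <= (1 - alpha) * log2 N%:R ->
         exists Y : Yspace N m -> R,
           [/\ is_dist Y, deficiency Y <= Delta &
             forall (I : {set 'I_N}) (gamma : {ffun 'I_N -> bool}),
               good_fix (@unif R _) Y I gamma ->
               c * (N%:R `^ alpha) <= #|I|%:R]).
Proof.
move=> D a D0 /andP[a0 a1].
have l2 := ln2_gt0.
set mu0 : R := 8 / (D * ln 2) + 8.
have mu00 : 0 <= mu0 by rewrite /mu0; apply: addr_ge0 => //; apply: divr_ge0 => //; nra.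
exists (1 / 2), (Num.truncn (mu0 `^ a^-1)).+1; split; first lra.
move=> N m hN m0 hm.
have Np : (0 : R) < N%:R by rewrite ltr0n (leq_trans _ hN).
have hNa : mu0 <= N%:R `^ a.
  have h1 : mu0 `^ a^-1 <= N%:R.
    apply: ltW; apply: lt_le_trans (truncnS_gt _) _; by rewrite ler_nat.
  have := ge0_ler_powR (ltW a0) _ _ h1; rewrite -powRrM mulVf ?gt_eqF // powRr1 //.
  by apply; rewrite ?nnegrE ?powR_ge0 ?ler0n.
have M0 : (0 : R) < (2 ^ m)%:R by rewrite ltr0n expn_gt0.
set mu : R := N%:R / (2 ^ m)%:R.
have hmu : N%:R `^ a <= mu.
  rewrite -ler_ln ?posrE ?powR_gt0 ?divr_gt0 //.
  rewrite ln_powR /mu ln_div ?posrE // natrX lnXn //.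
  rewrite -[ln _ *+ _]mulr_natr.
  move: hm; rewrite /log2 => hm.
  have : m%:R * ln 2 <= (1 - a) * ln N%:R.
    by move: hm; rewrite mulrA ler_pdivlMr.
  lra.
have mu8 : 8 <= mu.
  apply: (le_trans _ (le_trans hNa hmu)); rewrite /mu0 lerDr.
  by apply: divr_ge0 => //; nra.
have [Y [dY defY gY]] := @core R N m mu8.
exists Y; split => //.
- have mup : 0 < mu by lra.
  have : 8 / mu <= D * ln 2.
    rewrite ler_pdivrMr // mulrC -ler_pdivrMr; last by nra.
    apply: (le_trans _ (le_trans hNa hmu)).
    by rewrite /mu0 lerDl.
  move=> h; have := le_trans defY h; rewrite ler_pM2r //.
- move=> I g G; have := gY _ I g G; rewrite -/mu => h.
  lra.
Qed.

End Main.

Theorem corollary3 (R : realType) :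
  (forall c : R, exists K : R,
     forall (N m : nat) (Delta : R),
       1 <= Delta -> (0 < m)%N ->
       m%:R + K <= log2 (N%:R / Delta) ->
       exists (X : Xspace N m -> R) (Y : Yspace N m -> R),
         [/\ is_dist X, is_dist Y, deficiency X <= Delta, deficiency Y <= Delta &
           forall (I : {set 'I_N}) (gamma : {ffun 'I_N -> bool}),
             #|I|%:R <= c * Delta -> ~ good_fix X Y I gamma]) /\
  (forall Delta alpha : R, 0 < Delta -> 0 < alpha < 1 ->
     exists (c : R) (N0 : nat), 0 < c /\
       forall N m : nat, (N0 <= N)%N -> (0 < m)%N ->
         m%:R <= (1 - alpha) * log2 N%:R ->
         exists Y : Yspace N m -> R,
           [/\ is_dist Y, deficiency Y <= Delta &
             forall (I : {set 'I_N}) (gamma : {ffun 'I_N -> bool}),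
               good_fix (@unif R _) Y I gamma ->
               c * (N%:R `^ alpha) <= #|I|%:R]).
Proof. split; [exact: part1 | exact: part2]. Qed.
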